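(* Let $A\in\mathbb{C}^{n\times n}$ be Hermitian and let $Q\in\mathbb{C}^{n\times k}$, $2\le k\le n$, have orthonormal columns. Let $Q^*AQ=\Omega\widehat\Lambda\Omega^*$ with $\Omega$ unitary and $\widehat\Lambda=\mathrm{diag}(\widehat\lambda_1,\ldots,\widehat\lambda_k)$, and let $\widehat X=[\widehat x_1,\ldots,\widehat x_k]=Q\Omega$. Let $Q_\perp$ be such that $[Q\ Q_\perp]$ is unitary, and set $R=Q_\perp^*AQ\Omega=[r_1,\ldots,r_k]$, $A_3=Q_\perp^*AQ_\perp$, $\widehat\Lambda_2=\mathrm{diag}(\widehat\lambda_2,\ldots,\widehat\lambda_k)$, $R_2=[r_2,\ldots,r_k]$, and $\widehat x=\widehat x_1$. Let $(\lambda,x)$ be an eigenpair of $A$ with $\|x\|=1$, and define $\mathrm{Gap}=\min|\lambda-\lambda(A_3)|$, $\mathrm{gap}=\min|\lambda-\lambda(\widehat\Lambda_2)|$. Then: (i) if $\mathrm{Gap}>\|R_2\|^2/\mathrm{gap}$, then $$\sin\angle(x,\widehat x)\le\frac{\|r_1\|}{\mathrm{Gap}-\frac{\|R_2\|^2}{\mathrm{gap}}}\sqrt{1+\frac{\|R_2\|^2}{\mathrm{gap}^2}};$$ (ii) if $\mathrm{Gap}>\sum_{i=2}^k\frac{\|r_i\|^2}{|\lambda-\widehat\lambda_i|}$, then $$\sin\angle(x,\widehat x)\le\frac{\|r_1\|}{\mathrm{Gap}-\sum_{i=2}^k\frac{\|r_i\|^2}{|\lambda-\widehat\lambda_i|}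}\sqrt{1+\Big(\sum_{i=2}^k\frac{\|r_i\|}{|\lambda-\widehat\lambda_i|}\Big)^2}.$$
   Context: $\|\cdot\|$ is the Euclidean norm for vectors and the spectral norm for matrices. $\lambda(M)$ is the spectrum of a Hermitian matrix $M$ and $\min|\lambda-\lambda(M)|$ its distance to $\lambda$. For unit vectors, $\angle(x,\widehat x)=\arccos|\widehat x^*x|$. Note $\|r_i\|=\|A\widehat x_i-\widehat\lambda_i\widehat x_i\|$. A bound with a vanishing denominator is interpreted as $+\infty$. *)

(* Defs.v *)
From HB Require Import structures.
From mathcomp Require Import all_boot all_order all_algebra.
From mathcomp Require Import all_classical all_reals.
From mathcomp Require Import ereal topology normedtype trigo.
From mathcomp Require Import complex.
Set Implicit Arguments. Unset Strict Implicit. Unset Printing Implicit Defensive.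
Import Order.TTheory GRing.Theory Num.Theory.
Local Open Scope ring_scope.
Local Open Scope classical_set_scope.

Section Defs.
Variable R : realType.
Local Notation C := (R[i]).

Definition cmod (z : C) : R := Num.sqrt (complex.Re z ^+ 2 + complex.Im z ^+ 2).

Definition adj (m p : nat) (M : 'M[C]_(m, p)) : 'M[C]_(p, m) :=
  (map_mx (@conjc R) M)^T.

Definition vnorm (m : nat) (v : 'cV[C]_m) : R :=
  Num.sqrt (\sum_i cmod (v i 0) ^+ 2).

Definition specnorm (m p : nat) (M : 'M[C]_(m, p)) : R :=
  sup [set vnorm (M *m v) | v in [set v : 'cV[C]_p | vnorm v = 1]].

(* angle between unit vectors: arccos |xh^* x| *)
Definition vangle (m : nat) (x xh : 'cV[C]_m) : R :=
  acos (cmod ((adj xh *m x) 0 0)).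

(* min |lam - lambda(M)| over the spectrum; +oo if the spectrum is empty *)
Definition specdist (m : nat) (M : 'M[C]_m) (lam : C) : \bar R :=
  ereal_inf [set ((cmod (lam - mu))%:E)%E | mu in [set mu | eigenvalue M mu]].

Definition edivr (a d : R) : \bar R :=
  if d == 0 then +oo%E else (a / d)%:E.

End Defs.

(* Main.v *)
Require Import Defs.
From HB Require Import structures.
From mathcomp Require Import all_boot all_order all_algebra.
From mathcomp Require Import all_classical all_reals.
From mathcomp Require Import ereal topology normedtype trigo.
From mathcomp Require Import complex.
From mathcomp Require Import sesquilinear spectral.
From mathcomp Require Import ring lra.
Set Implicit Arguments. Unset Strict Implicit. Unset Printing Implicit Defensive.
Import Order.TTheory GRing.Theory Num.Theory.
Local Open Scope ring_scope.
Section H.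
Variable R : realType.
Local Notation C := (R[i]).

Lemma cmodE (z : C) : (cmod z)%:C%C = `|z|.
Proof. by rewrite normc_def. Qed.

Lemma cmod_ge0 (z : C) : 0 <= cmod z.
Proof. by rewrite /cmod sqrtr_ge0. Qed.

Lemma cmodM (a b : C) : cmod (a * b) = cmod a * cmod b.
Proof. by apply: complexI; rewrite rmorphM /= !cmodE normrM. Qed.

Lemma cmodD (a b : C) : cmod (a + b) <= cmod a + cmod b.
Proof. by rewrite -lecR rmorphD /= !cmodE ler_normD. Qed.

Lemma cmodB (a b : C) : cmod (a - b) = cmod (b - a).
Proof. by apply: complexI; rewrite !cmodE distrC. Qed.

Lemma cmodJ (z : C) : cmod (conjc z) = cmod z.
Proof. by apply: complexI; rewrite !cmodE normcJ. Qed.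

Lemma cmod_sq (z : C) : ((cmod z) ^+ 2)%:C%C = z * conjc z.
Proof. by rewrite rmorphXn /= cmodE sqr_normc. Qed.

Lemma cmod_eq0 (z : C) : (cmod z == 0) = (z == 0).
Proof. by rewrite -(inj_eq (@complexI _)) cmodE /= normr_eq0. Qed.

Lemma cmod_real (x : R) : cmod x%:C%C = `|x|.
Proof. by rewrite /cmod /= expr0n /= addr0 sqrtr_sqr. Qed.

Lemma cmod0 : cmod (0 : C) = 0.
Proof. by apply/eqP; rewrite cmod_eq0. Qed.

Lemma cmod_sum (I : Type) (s : seq I) (P : pred I) (F : I -> C) :
  cmod (\sum_(i <- s | P i) F i) <= \sum_(i <- s | P i) cmod (F i).
Proof.
apply: (big_ind2 (fun u r => cmod u <= r)); first by rewrite cmod0.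
  by move=> u1 r1 u2 r2 h1 h2; apply: le_trans (cmodD _ _) _; apply: lerD.
by [].
Qed.

Lemma cmod_sum_ord (I : finType) (F : I -> C) :
  cmod (\sum_i F i) <= \sum_i cmod (F i).
Proof. exact: cmod_sum. Qed.

Lemma cs_real (I : finType) (a b : I -> R) :
  (\sum_i a i * b i) ^+ 2 <= (\sum_i a i ^+ 2) * (\sum_i b i ^+ 2).
Proof.
set A := \sum_i a i ^+ 2; set B := \sum_i b i ^+ 2; set P := \sum_i a i * b i.
have A0 : 0 <= A by apply: sumr_ge0 => i _; apply: sqr_ge0.
have B0 : 0 <= B by apply: sumr_ge0 => i _; apply: sqr_ge0.
have [Ae0|Apos] := eqVneq A 0.
  have ai0 : forall i, a i = 0.
    move=> i; have /psumr_eq0P h := Ae0.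
    by apply/eqP; rewrite -sqrf_eq0; apply/eqP; apply: h => // j _; apply: sqr_ge0.
  rewrite /P big1 ?expr0n /= ?Ae0 ?mul0r // => i _; by rewrite ai0 mul0r.
have Ap : 0 < A by rewrite lt_neqAle eq_sym Apos A0.
pose u := P / A.
have E : forall t, \sum_i (a i * t + b i) ^+ 2 = t ^+ 2 * A + 2 * t * P + B.
  move=> t; rewrite /A /P /B !mulr_sumr -!big_split /=.
  by apply: eq_bigr => i _; ring.
have H := E (- u).
have : 0 <= \sum_i (a i * - u + b i) ^+ 2 by apply: sumr_ge0 => i _; apply: sqr_ge0.
rewrite H => h.
have Pu : P = u * A by rewrite /u divfK // gt_eqF.
rewrite Pu in h *.
nra.
Qed.

Lemma cs_real_sqrt (I : finType) (a b : I -> R) :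
  \sum_i a i * b i <= Num.sqrt (\sum_i a i ^+ 2) * Num.sqrt (\sum_i b i ^+ 2).
Proof.
rewrite -sqrtrM; last by apply: sumr_ge0 => i _; apply: sqr_ge0.
apply: le_trans (real_ler_norm _) _; first by apply: num_real.
by rewrite -sqrtr_sqr ler_wsqrtr // cs_real.
Qed.


Lemma adjE m p (M : 'M[C]_(m, p)) i j : adj M i j = conjc (M j i).
Proof. by rewrite /adj !mxE. Qed.

Lemma adj_mul m p q (A : 'M[C]_(m, p)) (B : 'M[C]_(p, q)) :
  adj (A *m B) = adj B *m adj A.
Proof. by rewrite /adj map_mxM trmx_mul. Qed.

Lemma adjK m p (A : 'M[C]_(m, p)) : adj (adj A) = A.
Proof. by apply/matrixP => i j; rewrite !adjE conjcK. Qed.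

Lemma adj_row_mx m p1 p2 (A : 'M[C]_(m, p1)) (B : 'M[C]_(m, p2)) :
  adj (row_mx A B) = col_mx (adj A) (adj B).
Proof. by rewrite /adj map_row_mx tr_row_mx. Qed.

Lemma vnorm_ge0 m (v : 'cV[C]_m) : 0 <= vnorm v.
Proof. by rewrite /vnorm sqrtr_ge0. Qed.

Lemma vnorm_sq m (v : 'cV[C]_m) : vnorm v ^+ 2 = \sum_i cmod (v i 0) ^+ 2.
Proof. by rewrite /vnorm sqr_sqrtr // sumr_ge0 // => i _; apply: sqr_ge0. Qed.

Lemma vnorm_sqrt m (v : 'cV[C]_m) : vnorm v = Num.sqrt (vnorm v ^+ 2).
Proof. by rewrite sqrtr_sqr ger0_norm // vnorm_ge0. Qed.

Lemma vnorm_dot m (v : 'cV[C]_m) : ((vnorm v) ^+ 2)%:C%C = (adj v *m v) 0 0.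
Proof.
rewrite vnorm_sq rmorph_sum !mxE; apply: eq_bigr => i _ /=.
by apply: eq_trans (cmod_sq _) _; rewrite adjE mulrC.
Qed.

Lemma vnorm_eq m m' (u : 'cV[C]_m) (v : 'cV[C]_m') : (adj u *m u) 0 0 = (adj v *m v) 0 0 ->
  vnorm u = vnorm v.
Proof.
by rewrite -!vnorm_dot => /complexI h; rewrite vnorm_sqrt h -vnorm_sqrt.
Qed.

Lemma vnorm_unitary m p (U : 'M[C]_(m, p)) (v : 'cV[C]_p) :
  adj U *m U = 1%:M -> vnorm (U *m v) = vnorm v.
Proof.
by move=> hU; apply: vnorm_eq; rewrite adj_mul -mulmxA (mulmxA (adj U) U) hU mul1mx.
Qed.

Lemma vnorm0 m : vnorm (0 : 'cV[C]_m) = 0.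
Proof. by rewrite /vnorm big1 ?sqrtr0 // => i _; rewrite mxE cmod0 expr0n. Qed.

Lemma vnormZ m (a : C) (v : 'cV[C]_m) : vnorm (a *: v) = cmod a * vnorm v.
Proof.
rewrite /vnorm (eq_bigr (fun i => cmod a ^+ 2 * cmod (v i 0) ^+ 2)); last first.
  by move=> i _; rewrite mxE cmodM exprMn.
rewrite -mulr_sumr sqrtrM ?sqr_ge0 // sqrtr_sqr ger0_norm //; exact: cmod_ge0.
Qed.

Lemma sqr_le_sqrt (x y : R) : 0 <= y -> x ^+ 2 <= y ^+ 2 -> x <= y.
Proof. move=> y0 h; nra. Qed.

Lemma vnormD m (u v : 'cV[C]_m) : vnorm (u + v) <= vnorm u + vnorm v.
Proof.
apply: sqr_le_sqrt; first by rewrite addr_ge0 ?vnorm_ge0.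
rewrite vnorm_sq sqrrD !vnorm_sq.
have cs := @cs_real_sqrt 'I_m (fun i => cmod (u i 0)) (fun i => cmod (v i 0)).
rewrite /= -/(vnorm u) -/(vnorm v) in cs.
apply: (@le_trans _ _ (\sum_i (cmod (u i 0) + cmod (v i 0)) ^+ 2)).
  apply: ler_sum => i _; rewrite mxE.
  have h1 := cmodD (u i 0) (v i 0); have h2 := cmod_ge0 (u i 0 + v i 0); nra.
rewrite (eq_bigr (fun i => cmod (u i 0) ^+ 2 + cmod (v i 0) ^+ 2 +
     2 * (cmod (u i 0) * cmod (v i 0)))); last by move=> i _; ring.
rewrite !big_split /= -mulr_sumr.
move: cs; set a := \sum_(i < m) _; set b := \sum_(i < m) _; set c := \sum_(i < m) _.
move=> cs; lra.
Qed.

Lemma vnorm_sum m (I : Type) (s : seq I) (P : pred I) (F : I -> 'cV[C]_m) :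
  vnorm (\sum_(i <- s | P i) F i) <= \sum_(i <- s | P i) vnorm (F i).
Proof.
apply: (big_ind2 (fun u r => vnorm u <= r)); first by rewrite vnorm0.
  move=> u1 r1 u2 r2 h1 h2; apply: (le_trans _ (lerD h1 h2)). exact: vnormD.
by [].
Qed.

Lemma dot_cs m (u v : 'cV[C]_m) : cmod ((adj u *m v) 0 0) <= vnorm u * vnorm v.
Proof.
rewrite mxE; apply: le_trans (cmod_sum_ord _) _.
rewrite (eq_bigr (fun i => cmod (u i 0) * cmod (v i 0))); last first.
  by move=> i _; rewrite adjE cmodM cmodJ.
exact: cs_real_sqrt.
Qed.

Lemma adj_col_mul m p (M : 'M[C]_(m, p)) (v : 'cV[C]_m) i :
  (adj (col i M) *m v) 0 0 = (adj M *m v) i 0.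
Proof. by rewrite !mxE; apply: eq_bigr => j _; rewrite !adjE !mxE. Qed.

Lemma mul_sum_col m p (M : 'M[C]_(m, p)) (v : 'cV[C]_p) :
  M *m v = \sum_j v j 0 *: col j M.
Proof.
apply/matrixP => i k; rewrite !mxE summxE; apply: eq_bigr => j _.
by rewrite !mxE (ord1 k) mulrC.
Qed.


Lemma cmod_le_vnorm m (v : 'cV[C]_m) j : cmod (v j 0) <= vnorm v.
Proof.
apply: sqr_le_sqrt; first exact: vnorm_ge0.
rewrite vnorm_sq (bigD1 j) //= lerDl; apply: sumr_ge0 => i _; exact: sqr_ge0.
Qed.

Lemma mulmx_col_bound m p (M : 'M[C]_(m, p)) (v : 'cV[C]_p) :
  vnorm (M *m v) <= \sum_j cmod (v j 0) * vnorm (col j M).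
Proof.
rewrite mul_sum_col; apply: le_trans (vnorm_sum _ _ _) _.
by apply: ler_sum => j _; rewrite vnormZ.
Qed.

Lemma specnorm_ub m p (M : 'M[C]_(m, p)) (v : 'cV[C]_p) :
  vnorm (M *m v) <= specnorm M * vnorm v.
Proof.
have hub : has_ubound [set vnorm (M *m v) | v in [set v : 'cV[C]_p | vnorm v = 1]].
  exists (\sum_j vnorm (col j M)) => _ [w /= w1 <-].
  apply: le_trans (mulmx_col_bound _ _) _; apply: ler_sum => j _.
  rewrite -[X in _ <= X]mul1r ler_wpM2r ?vnorm_ge0 //.
  by rewrite -w1 cmod_le_vnorm.
have [v0|vn0] := eqVneq (vnorm v) 0.
  rewrite v0 mulr0; apply: le_trans (mulmx_col_bound _ _) _.
  rewrite big1 // => j _.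
  have := cmod_le_vnorm v j; rewrite v0 => h.
  have -> : cmod (v j 0) = 0 by apply/eqP; rewrite eq_le h cmod_ge0.
  by rewrite mul0r.
have vpos : 0 < vnorm v by rewrite lt_neqAle eq_sym vn0 vnorm_ge0.
set a : C := ((vnorm v)^-1)%:C%C.
have ca : cmod a = (vnorm v)^-1 by rewrite /a cmod_real ger0_norm // invr_ge0 ltW.
have : vnorm (M *m (a *: v)) <= specnorm M.
  apply: ub_le_sup => //; exists (a *: v) => //=.
  by rewrite vnormZ ca mulVf.
rewrite -scalemxAr vnormZ ca => h.
by rewrite -ler_pdivrMr // mulrC.
Qed.

Lemma vnorm_delta p : vnorm (delta_mx 0 0 : 'cV[C]_p.+1) = 1.
Proof.
rewrite /vnorm (bigD1 0) //= big1 => [|i ni].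
  by rewrite mxE !eqxx /= cmod_real normr1 expr1n addr0 sqrtr1.
by rewrite mxE (negPf ni) /= cmod_real normr0 expr0n.
Qed.

Lemma specnorm_ge0 m p (M : 'M[C]_(m, p.+1)) : 0 <= specnorm M.
Proof.
have := specnorm_ub M (delta_mx 0 0); rewrite vnorm_delta mulr1.
by apply: le_trans; apply: vnorm_ge0.
Qed.

Lemma eig_diag n (d : 'rV[C]_n) j : eigenvalue (diag_mx d) (d 0 j).
Proof.
apply/eigenvalueP; exists (delta_mx 0 j); first by rewrite -rowE row_diag_mx.
apply/negP => /eqP/matrixP/(_ 0 j); rewrite !mxE !eqxx /= => /eqP.
by rewrite oner_eq0.
Qed.

Lemma specdist_ge0 n (M : 'M[C]_n) lam : (0 <= specdist M lam)%E.
Proof. by apply: le_ereal_inf_tmp => _ [mu _ <-]; rewrite lee_fin cmod_ge0. Qed.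

Lemma specdist_le n (M : 'M[C]_n) lam mu : eigenvalue M mu ->
  (specdist M lam <= (cmod (lam - mu))%:E)%E.
Proof. by move=> h; apply: ereal_inf_lbound; exists mu. Qed.


Local Open Scope sesquilinear_scope.
Lemma adj_tC m p (M : 'M[C]_(m, p)) : adj M = M ^t*.
Proof. by rewrite /adj map_trmx. Qed.

Lemma gap_bound n (A3 : 'M[C]_n) lam (z : 'cV[C]_n) g :
  adj A3 = A3 -> (g%:E <= specdist A3 lam)%E ->
  g * vnorm z <= vnorm (lam *: z - A3 *m z).
Proof.
move=> hA hg.
have nA : A3 \is normalmx by apply/normalmxP; rewrite -adj_tC hA.
have eA := (orthomx_spectralP nA).
set P := spectralmx A3 in eA; set sp := spectral_diag A3 in eA.
have PU : P \is unitarymx by apply: spectral_unitarymx.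
have PPa : P *m adj P = 1%:M by rewrite adj_tC; apply/unitarymxP.
have PaP : adj P *m P = 1%:M.
  have : P ^t* \is unitarymx by rewrite trmxC_unitary.
  by move/unitarymxP; rewrite trmxCK -adj_tC.
have iP : invmx P = adj P by rewrite adj_tC invmx_unitary.
rewrite iP in eA.
have geig : forall j, g <= cmod (lam - sp 0 j).
  move=> j; rewrite -lee_fin; apply: le_trans hg _; apply: specdist_le.
  apply/eigenvalueP; exists (row j P).
    rewrite {1}eA !mulmxA rowE -(mulmxA _ P) PPa mulmx1.
    by rewrite -(rowE j (diag_mx sp)) row_diag_mx -scalemxAl.
  apply/negP => /eqP h.
  have : row j (P *m adj P) = 0 by rewrite row_mul h mul0mx.
  rewrite PPa => /matrixP/(_ 0 j); rewrite !mxE !eqxx /= => /eqP.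
  by rewrite oner_eq0.
set w := P *m z.
have ez : lam *: z - A3 *m z = adj P *m (lam *: w - diag_mx sp *m w).
  rewrite mulmxBr -scalemxAr /w !mulmxA PaP mul1mx.
  by rewrite {1}eA.
have nz : vnorm z = vnorm w.
  by rewrite /w vnorm_unitary // -adj_tC.
rewrite ez vnorm_unitary ?adjK // nz.
have [g0|gpos] := lerP g 0.
  apply: le_trans (vnorm_ge0 _); have := vnorm_ge0 w; nra.
apply: sqr_le_sqrt; first exact: vnorm_ge0.
rewrite exprMn !vnorm_sq mulr_sumr; apply: ler_sum => j _.
rewrite mul_diag_mx !mxE -mulrBl cmodM exprMn.
apply: ler_wpM2r; first exact: sqr_ge0.
have := geig j; have := cmod_ge0 (lam - sp 0 j); nra.
Qed.


Lemma final_bound (r0 Z S T c K : R) (Gap : \bar R) :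
  0 <= r0 -> 0 <= Z -> 0 <= S -> S <= Z * T -> K <= r0 + c * Z ->
  (forall g, (g%:E <= Gap)%E -> g * Z <= K) -> (c%:E < Gap)%E ->
  ((Num.sqrt (S ^+ 2 + Z ^+ 2))%:E <=
     r0%:E / (Gap - c%:E) * (Num.sqrt (1 + T ^+ 2))%:E)%E.
Proof.
move=> r00 Z0 S0 SZ KZ hg.
case: Gap hg => [G| |] hg hlt.
- have hG := hg G (le_refl _).
  rewrite lte_fin in hlt.
  have Gc : (G - c != 0) by rewrite subr_eq0 gt_eqF.
  rewrite -EFinB inver (negPf Gc) -!EFinM lee_fin.
  have Zb : Z <= r0 / (G - c).
    rewrite ler_pdivlMr ?subr_gt0 //; nra.
  have e : Num.sqrt (S ^+ 2 + Z ^+ 2) <= Num.sqrt (Z ^+ 2 * (1 + T ^+ 2)).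
    apply: ler_wsqrtr; nra.
  apply: le_trans e _.
  rewrite sqrtrM ?sqr_ge0 // sqrtr_sqr ger0_norm //.
  apply: ler_wpM2r => //; exact: sqrtr_ge0.
- have Z00 : Z = 0.
    apply/eqP; rewrite eq_le Z0 andbT; rewrite leNgt; apply/negP => hZ.
    have := hg ((K + 1) / Z) (leey _).
    rewrite divfK ?gt_eqF //; lra.
  have S00 : S = 0 by apply/eqP; rewrite eq_le S0 andbT; rewrite Z00 mul0r in SZ.
  rewrite Z00 S00 expr0n /= addr0 sqrtr0 addye // invey mule0 mul0e.
  by [].
- by [].
Qed.


Lemma sqrt_sum_le (I : finType) (a : I -> R) : (forall i, 0 <= a i) ->
  Num.sqrt (\sum_i a i ^+ 2) <= \sum_i a i.
Proof.
move=> a0; apply: sqr_le_sqrt; first by apply: sumr_ge0.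
rewrite sqr_sqrtr; last by apply: sumr_ge0 => i _; apply: sqr_ge0.
pose K (u v : R) := 0 <= v /\ u <= v ^+ 2.
suff [] : K (\sum_i a i ^+ 2) (\sum_i a i) by [].
apply: (big_rec2 K); first by split => //; rewrite expr0n.
move=> i u v _ [v0 uv]; split; first by rewrite addr_ge0.
have := a0 i; nra.
Qed.

Lemma big_neq0 (T : Type) (idx : T) (op : Monoid.law idx) n (F : 'I_n.+1 -> T) :
  \big[op/idx]_(i < n.+1 | i != ord0) F i = \big[op/idx]_(j < n) F (lift ord0 j).
Proof.
by rewrite big_mkcond big_ord_recl /= Monoid.mul1m.
Qed.

Lemma vnorm_col_mx m1 m2 (a : 'cV[C]_m1) (b : 'cV[C]_m2) :
  vnorm (col_mx a b) ^+ 2 = vnorm a ^+ 2 + vnorm b ^+ 2.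
Proof.
rewrite !vnorm_sq big_split_ord /=.
by congr (_ + _); apply: eq_bigr => i _; rewrite ?col_mxEu ?col_mxEd.
Qed.


Lemma edivr_ge0 (a d : R) : 0 <= a -> 0 <= d -> (0 <= edivr a d)%E.
Proof.
move=> a0 d0; rewrite /edivr; case: eqP => _; first exact: leey.
by rewrite lee_fin divr_ge0.
Qed.

End H.
Unset Implicit Arguments. Set Strict Implicit.

Theorem theorem4p1 (R : realType) (n m : nat) (hkn : (m.+2 <= n)%N)
    (A : 'M[R[i]]_n) (hA : adj A = A)
    (Q : 'M[R[i]]_(n, m.+2)) (hQ : adj Q *m Q = 1%:M)
    (Om : 'M[R[i]]_(m.+2)) (hOm : adj Om *m Om = 1%:M /\ Om *m adj Om = 1%:M)
    (lamh : 'rV[R[i]]_(m.+2))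
    (hdec : adj Q *m A *m Q = Om *m diag_mx lamh *m adj Om)
    (Qp : 'M[R[i]]_(n, n - m.+2))
    (hQp : adj (row_mx Q Qp) *m row_mx Q Qp = 1%:M /\
           row_mx Q Qp *m adj (row_mx Q Qp) = 1%:M)
    (lam : R[i]) (x : 'cV[R[i]]_n)
    (hx : A *m x = lam *: x) (hxn : vnorm x = 1) :
  let Xh := Q *m Om in
  let xh := col ord0 Xh in
  let Rm := adj Qp *m A *m Q *m Om in
  let r := fun i : 'I_m.+2 => col i Rm in
  let A3 := adj Qp *m A *m Qp in
  let R2 := \matrix_(i < n - m.+2, j < m.+1) Rm i (lift ord0 j) in
  let Lamh2 := diag_mx (\row_(j < m.+1) lamh 0 (lift ord0 j)) in
  let Gap : \bar R := specdist A3 lam in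
  let gap : R := fine (specdist Lamh2 lam) in
  let c1 : \bar R := edivr (specnorm R2 ^+ 2) gap in
  let c2 : \bar R :=
    (\sum_(i < m.+2 | i != ord0) edivr (vnorm (r i) ^+ 2)%R (cmod (lam - lamh 0 i)%R))%E in
  ((c1 < Gap)%E ->
     ((sin (vangle x xh))%:E <=
        (vnorm (r ord0))%:E / (Gap - c1) *
        (Num.sqrt (1 + specnorm R2 ^+ 2 / gap ^+ 2))%:E)%E) /\
  ((c2 < Gap)%E ->
     ((sin (vangle x xh))%:E <=
        (vnorm (r ord0))%:E / (Gap - c2) *
        (Num.sqrt (1 + (\sum_(i < m.+2 | i != ord0)
                          vnorm (r i) / cmod (lam - lamh 0 i)) ^+ 2))%:E)%E).
Proof.
move=> Xh xh Rm r A3 R2 Lamh2 Gap gap c1 c2.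
have [hOm1 hOm2] := hOm; have [hW1 hW2] := hQp.
set W := row_mx Q Qp in hW1 hW2.
set y0 := adj Q *m x; set z := adj Qp *m x; set y := adj Om *m y0.
have hWx : adj W *m x = col_mx y0 z by rewrite /W adj_row_mx mul_col_mx.
have y0E : y0 = Om *m y by rewrite /y mulmxA hOm2 mul1mx.
have xE : x = Q *m Om *m y + Qp *m z.
  have : x = W *m (adj W *m x) by rewrite mulmxA hW2 mul1mx.
  by rewrite hWx /W mul_row_col y0E mulmxA.
have n1 : vnorm y ^+ 2 + vnorm z ^+ 2 = 1.
  have e1 : vnorm (adj W *m x) = vnorm x by apply: vnorm_unitary; rewrite adjK.
  have e2 : vnorm y = vnorm y0 by apply: vnorm_unitary; rewrite adjK.
  by rewrite e2 -vnorm_col_mx -hWx e1 hxn expr1n.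
set Y0 := cmod (y ord0 0).
set S := Num.sqrt (\sum_(j < m.+1) cmod (y (lift ord0 j) 0) ^+ 2).
set Z := vnorm z.
have S0 : 0 <= S by apply: sqrtr_ge0.
have Z0 : 0 <= Z by apply: vnorm_ge0.
have Y00 : 0 <= Y0 by apply: cmod_ge0.
have n2 : Y0 ^+ 2 + S ^+ 2 + Z ^+ 2 = 1.
  have hS2 : S ^+ 2 = \sum_(j < m.+1) cmod (y (lift ord0 j) 0) ^+ 2.
    by rewrite /S sqr_sqrtr //; apply: sumr_ge0 => i _; apply: sqr_ge0.
  by rewrite -n1 vnorm_sq big_ord_recl hS2.
have hsin : sin (vangle x xh) = Num.sqrt (S ^+ 2 + Z ^+ 2).
  have -> : vangle x xh = acos Y0.
    by rewrite /vangle /xh /Xh adj_col_mul adj_mul -mulmxA.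
  rewrite sin_acos; first by congr Num.sqrt; lra.
  apply/andP; split; first by apply: le_trans Y00; rewrite lerN10.
  have := sqr_ge0 S; have := sqr_ge0 Z; nra.
have hA3 : adj A3 = A3.
 rewrite /A3 !adj_mul adjK hA. exact: mulmxA.
have Ez : lam *: z - A3 *m z = Rm *m y.
  have gen : forall (yy : 'cV_m.+2) (zz : 'cV_(n - m.+2)),
      x = Q *m Om *m yy + Qp *m zz -> adj Qp *m x = zz ->
      lam *: zz - A3 *m zz = Rm *m yy.
    move=> yy zz hxe hz.
    have : adj Qp *m (A *m x) = lam *: zz by rewrite hx -scalemxAr hz.
    rewrite {1}hxe mulmxDr mulmxDr !mulmxA => <-.
    by rewrite /Rm /A3 addrK.
  exact: gen.
have key1 : adj Om *m adj Q *m A *m Q *m Om = diag_mx lamh.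
  transitivity (adj Om *m (adj Q *m A *m Q) *m Om); first by rewrite !mulmxA.
  by rewrite hdec !mulmxA hOm1 mul1mx -mulmxA hOm1 mulmx1.
have key2 : adj Om *m adj Q *m A *m Qp = adj Rm.
  by rewrite /Rm !adj_mul adjK hA !mulmxA.
have Ey : forall i, (lam - lamh 0 i) * y i 0 = (adj (r i) *m z) 0 0.
  have gen : forall (yy : 'cV_m.+2) (zz : 'cV_(n - m.+2)),
      x = Q *m Om *m yy + Qp *m zz -> adj Om *m adj Q *m x = yy ->
      lam *: yy = diag_mx lamh *m yy + adj Rm *m zz.
    move=> yy zz hxe hy.
    have : adj Om *m adj Q *m (A *m x) = lam *: yy by rewrite hx -scalemxAr hy.
    rewrite {1}hxe mulmxDr mulmxDr !mulmxA => <-.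
    by rewrite key1 key2.
  have h : lam *: y = diag_mx lamh *m y + adj Rm *m z.
    by apply: gen => //; rewrite /y /y0 mulmxA.
  clearbody y; move=> i; rewrite adj_col_mul.
  have := congr1 (fun M : 'cV[R[i]]_m.+2 => M i 0) h; rewrite /= mul_diag_mx !mxE.
  by move=> e; rewrite mulrBl e addrAC subrr add0r.
have Ky : forall i, cmod (lam - lamh 0 i) * cmod (y i 0) <= vnorm (r i) * Z.
  by move=> i; rewrite -cmodM Ey dot_cs.
have Y01 : Y0 <= 1 by have := sqr_ge0 S; have := sqr_ge0 Z; nra.
set K := vnorm (lam *: z - A3 *m z).
have Kb : K <= vnorm (r ord0) +
    vnorm (\sum_(j < m.+1) y (lift ord0 j) 0 *: r (lift ord0 j)).
  rewrite /K Ez mul_sum_col big_ord_recl.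
  apply: le_trans (vnormD _ _) _; rewrite lerD2r vnormZ.
  by rewrite -[X in _ <= X]mul1r ler_wpM2r // vnorm_ge0.
have Gb : forall g, (g%:E <= Gap)%E -> g * Z <= K.
  by move=> g hg; apply: gap_bound.
have r00 : 0 <= vnorm (r ord0) by apply: vnorm_ge0.
split.
- move=> hc1.
  have gE : forall j, (specdist Lamh2 lam <= (cmod (lam - lamh 0 (lift ord0 j)))%:E)%E.
    move=> j; have := specdist_le lam (eig_diag (\row_j0 lamh 0 (lift ord0 j0)) j).
    by rewrite mxE.
  have gfin : specdist Lamh2 lam \is a fin_num.
    rewrite fin_numElt; apply/andP; split.
      exact: (lt_le_trans (ltNyr 0) (specdist_ge0 _ _)).
    exact: (le_lt_trans (gE ord0) (ltry _)).
  have gE' : gap%:E = specdist Lamh2 lam by rewrite /gap fineK.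
  have gap0 : 0 <= gap by rewrite -lee_fin gE' specdist_ge0.
  have gapj : forall j, gap <= cmod (lam - lamh 0 (lift ord0 j)).
    by move=> j; rewrite -lee_fin gE'.
  have gapn0 : gap != 0.
    by apply/negP => /eqP g0; move: hc1; rewrite /c1 /edivr g0 eqxx ltNge leey.
  have gpos : 0 < gap by rewrite lt_neqAle eq_sym gapn0 gap0.
  set N := specnorm R2.
  have N0 : 0 <= N by apply: specnorm_ge0.
  have c1E : c1 = (N ^+ 2 / gap)%:E by rewrite /c1 /edivr (negPf gapn0).
  have colR2 : forall j, col j R2 = r (lift ord0 j).
    by move=> j; apply/matrixP => a b; rewrite !mxE.
  set y2 : 'cV_m.+1 := \col_j y (lift ord0 j) 0.
  have VE : \sum_(j < m.+1) y (lift ord0 j) 0 *: r (lift ord0 j) = R2 *m y2.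
    by rewrite mul_sum_col; apply: eq_bigr => j _; rewrite colR2 /y2 [in RHS]mxE.
  have y2n : vnorm y2 = S.
    by rewrite /vnorm /S; congr Num.sqrt; apply: eq_bigr => k _; rewrite /y2 mxE.
  have wb : vnorm (adj R2 *m z) <= N * Z.
    set w := adj R2 *m z.
    have : vnorm w ^+ 2 <= Z * (N * vnorm w).
      have e : vnorm w ^+ 2 = cmod ((adj z *m (R2 *m w)) 0 0).
        have := vnorm_dot w; rewrite {2}/w adj_mul adjK -mulmxA => <-.
        by rewrite cmod_real ger0_norm // sqr_ge0.
      rewrite e; apply: le_trans (dot_cs _ _) _; apply: ler_wpM2l => //.
      exact: specnorm_ub.
    have := vnorm_ge0 w; have := mulr_ge0 N0 Z0.
    rewrite mulrA (mulrC Z); set p := N * Z; set t := vnorm w; nra.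
  have Sb : gap * S <= N * Z.
    apply: sqr_le_sqrt; first by apply: mulr_ge0.
    have : vnorm (adj R2 *m z) ^+ 2 <= (N * Z) ^+ 2.
      have := vnorm_ge0 (adj R2 *m z); nra.
    apply: le_trans.
    rewrite exprMn /S sqr_sqrtr; last by apply: sumr_ge0 => i _; apply: sqr_ge0.
    rewrite vnorm_sq mulr_sumr; apply: ler_sum => k _.
    rewrite -[(adj R2 *m z) k 0]adj_col_mul colR2 -Ey cmodM exprMn.
    apply: ler_wpM2r; first exact: sqr_ge0.
    have := gapj k; have := cmod_ge0 (y (lift ord0 k) 0); nra.
  rewrite hsin; rewrite c1E in hc1 *.
  have -> : N ^+ 2 / gap ^+ 2 = (N / gap) ^+ 2 by rewrite expr_div_n.
  apply: (@final_bound _ _ _ _ _ _ K) => //.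
  + have := divfK gapn0 N; set t := N / gap => hN.
    rewrite -hN in Sb; nra.
  + apply: le_trans Kb _; rewrite lerD2l VE.
    apply: le_trans (specnorm_ub _ _) _; rewrite y2n -/N.
    have := divfK gapn0 N; set t := N / gap => hN.
    have -> : N ^+ 2 / gap = N * t by rewrite /t expr2 mulrA.
    rewrite -hN in Sb; nra.
- move=> hc2.
  set d := fun i => cmod (lam - lamh 0 i).
  have d0 : forall i, 0 <= d i by move=> i; apply: cmod_ge0.
  have dpos : forall j, d (lift ord0 j) != 0.
    move=> j; apply/negP => /eqP dj0; move: hc2.
    rewrite /c2 big_neq0 (bigD1 j) //= {1}/edivr.
    have -> : cmod (lam - lamh 0 (lift ord0 j)) == 0 by apply/eqP.
    rewrite addye ?ltNge ?leey //.
    rewrite gt_eqF // (lt_le_trans (ltNyr 0)) // sume_ge0 // => i _.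
    by apply: edivr_ge0; [apply: sqr_ge0 | apply: cmod_ge0].
  have dgt : forall j, 0 < d (lift ord0 j).
    by move=> j; rewrite lt_neqAle eq_sym dpos d0.
  set c := \sum_(j < m.+1) vnorm (r (lift ord0 j)) ^+ 2 / d (lift ord0 j).
  have c2E : c2 = c%:E.
    rewrite /c2 big_neq0 /c -sumEFin; apply: eq_bigr => j _.
    by rewrite /edivr (negPf (dpos j)).
  set T := \sum_(j < m.+1) vnorm (r (lift ord0 j)) / d (lift ord0 j).
  have TE : \sum_(i < m.+2 | i != ord0) vnorm (r i) / cmod (lam - lamh 0 i) = T.
    by rewrite big_neq0.
  have yb : forall j, cmod (y (lift ord0 j) 0) <=
      Z * (vnorm (r (lift ord0 j)) / d (lift ord0 j)).
    move=> j; rewrite mulrA ler_pdivlMr // mulrC (mulrC Z); exact: Ky.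
  rewrite hsin TE; rewrite c2E in hc2 *.
  apply: (@final_bound _ _ _ _ _ _ K) => //.
  + apply: le_trans (sqrt_sum_le (fun j => cmod_ge0 (y (lift ord0 j) 0))) _.
    by rewrite /T mulr_sumr; apply: ler_sum => j _; apply: yb.
  + apply: le_trans Kb _; rewrite lerD2l.
    apply: le_trans (vnorm_sum _ _ _) _.
    rewrite /c mulr_suml; apply: ler_sum => j _; rewrite vnormZ.
    apply: le_trans (ler_wpM2r (vnorm_ge0 _) (yb j)) _.
    rewrite le_eqVlt; apply/orP; left; apply/eqP; rewrite expr2; ring.
Qed.
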